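(* Let $(X,d)$ be a complete metric space and let $\{T_i\}_{i\in\mathbb{N}}$ be a sequence of continuous maps $T_i:X\to X$, where each $T_i$ is a $\phi$-contraction with comparison function $\phi_i$ satisfying $\phi_i(t)<t$ for all $t>0$. Suppose there is $x_0\in X$ with $\sup_{i\in\mathbb{N}} d(T_i(x_0),x_0)<\infty$, and that $$\sum_{k=1}^{\infty}\phi_1\circ\phi_2\circ\cdots\circ\phi_k(t)<\infty\quad\text{for every } t>0.$$ Then there is a point $\bar x\in X$ such that for every initial point $x\in X$ the backward trajectory $\Psi_k(x)=T_1\circ T_2\circ\cdots\circ T_k(x)$ converges to $\bar x$ as $k\to\infty$.
   Context: A comparison function is a non-decreasing map $\phi:[0,\infty)\to[0,\infty)$ such that $\phi^p(t)\to 0$ as $p\to\infty$ for every $t\ge 0$, where $\phi^p$ denotes the $p$-fold composition of $\phi$. A map $T:X\to X$ is a $\phi$-contraction with comparison function $\phi$ if $d(T(x),T(y))\le\phi(d(x,y))$ for all $x,y\in X$. *)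

(* Defs.v *)
From Stdlib Require Import Reals.
From Coquelicot Require Import Coquelicot.
Open Scope R_scope.

Definition is_metric {X : Type} (d : X -> X -> R) : Prop :=
  (forall x y, 0 <= d x y) /\
  (forall x y, d x y = 0 <-> x = y) /\
  (forall x y, d x y = d y x) /\
  (forall x y z, d x z <= d x y + d y z).

Definition cauchy_seq {X : Type} (d : X -> X -> R) (u : nat -> X) : Prop :=
  forall eps, 0 < eps -> exists N, forall m n, (N <= m)%nat -> (N <= n)%nat ->
    d (u m) (u n) < eps.

Definition seq_converges_to {X : Type} (d : X -> X -> R) (u : nat -> X) (l : X) : Prop :=
  forall eps, 0 < eps -> exists N, forall n, (N <= n)%nat -> d (u n) l < eps.

Definition complete_metric {X : Type} (d : X -> X -> R) : Prop :=
  is_metric d /\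
  forall u : nat -> X, cauchy_seq d u -> exists l, seq_converges_to d u l.

Definition metric_continuous {X : Type} (d : X -> X -> R) (T : X -> X) : Prop :=
  forall x eps, 0 < eps -> exists delta, 0 < delta /\
    forall y, d x y < delta -> d (T x) (T y) < eps.

(* Comparison function phi : [0,oo) -> [0,oo), represented as R -> R with all
   requirements imposed on [0,oo) only. *)
Definition comparison_function (phi : R -> R) : Prop :=
  (forall t, 0 <= t -> 0 <= phi t) /\
  (forall s t, 0 <= s -> s <= t -> phi s <= phi t) /\
  (forall t, 0 <= t -> is_lim_seq (fun p => Rbar.Finite (Nat.iter p phi t)) 0).

Definition phi_contraction {X : Type} (d : X -> X -> R) (phi : R -> R) (T : X -> X) : Prop :=
  comparison_function phi /\ forall x y, d (T x) (T y) <= phi (d x y).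

(* comp_first f k = f 0 o f 1 o ... o f (k-1)  (identity for k = 0). *)
Fixpoint comp_first {A : Type} (f : nat -> A -> A) (k : nat) : A -> A :=
  match k with
  | O => fun x => x
  | S k' => fun x => comp_first f k' (f k' x)
  end.

(* Main.v *)
Require Import Defs.
From Stdlib Require Import Reals Lra Lia.
From Coquelicot Require Import Coquelicot.
Open Scope R_scope.

Lemma Phi_props (phi : nat -> R -> R) :
  (forall i, comparison_function (phi i)) ->
  forall k, (forall t, 0 <= t -> 0 <= comp_first phi k t) /\
    (forall s t, 0 <= s -> s <= t -> comp_first phi k s <= comp_first phi k t).
Proof.
  intros H k. induction k as [|k [IH1 IH2]]; simpl.
  - split; intros; lra.
  - destruct (H k) as [P1 [P2 _]]. split.
    + intros t Ht. apply IH1, P1, Ht.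
    + intros s t Hs Hst. apply IH2; [apply P1, Hs | apply P2; auto].
Qed.

Lemma Psi_contr (X : Type) (d : X -> X -> R) (T : nat -> X -> X) (phi : nat -> R -> R) :
  is_metric d ->
  (forall i, phi_contraction d (phi i) (T i)) ->
  forall k x y, d (comp_first T k x) (comp_first T k y) <= comp_first phi k (d x y).
Proof.
  intros Hm H k. induction k as [|k IH]; intros x y; simpl.
  - lra.
  - eapply Rle_trans. apply IH.
    assert (Hc : forall i, comparison_function (phi i)) by (intro i; apply (H i)).
    destruct (Phi_props phi Hc k) as [_ P2]. apply P2.
    + apply Hm.
    + apply (H k).
Qed.

Theorem proposition3p11 (X : Type) (d : X -> X -> R)
  (T : nat -> X -> X) (phi : nat -> R -> R) :
  complete_metric d ->
  (forall i, metric_continuous d (T i)) ->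
  (forall i, phi_contraction d (phi i) (T i)) ->
  (forall i t, 0 < t -> phi i t < t) ->
  (exists x0 : X, exists M : R, forall i, d (T i x0) x0 <= M) ->
  (forall t, 0 < t -> ex_series (fun k => comp_first phi (S k) t)) ->
  exists xbar : X, forall x : X,
    seq_converges_to d (fun k => comp_first T k x) xbar.
Proof.
  intros [Hm Hcomp] _ Hc _ [x0 [M HM]] Hser.
  assert (Hcf : forall i, comparison_function (phi i)) by (intro i; apply (Hc i)).
  pose proof (Phi_props phi Hcf) as PP.
  set (M' := Rmax M 1).
  assert (HM'p : 0 < M') by (unfold M'; generalize (Rmax_r M 1); lra).
  set (b := fun k => comp_first phi (S k) M').
  set (v := fun k => comp_first T (S k) x0).
  assert (Hstep : forall k, d (v k) (v (S k)) <= b k).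
  { intro k. unfold v, b.
    change (comp_first T (S (S k)) x0) with (comp_first T (S k) (T (S k) x0)).
    eapply Rle_trans. apply Psi_contr; auto.
    destruct (PP (S k)) as [_ P2]. apply P2. apply Hm.
    rewrite (proj1 (proj2 (proj2 Hm))). eapply Rle_trans. apply HM.
    unfold M'; apply Rmax_l. }
  assert (Hsum : forall m p, d (v m) (v (m + S p)%nat) <= sum_n_m b m (m + p)).
  { intros m p. induction p as [|p IH].
    - rewrite Nat.add_0_r, sum_n_n. replace (m + 1)%nat with (S m) by lia. apply Hstep.
    - replace (m + S p)%nat with (S (m + p)) by lia.
      rewrite sum_n_Sm by lia.
      eapply Rle_trans. apply (proj2 (proj2 (proj2 Hm))) with (y := v (m + S p)%nat).
      change (plus (sum_n_m b m (m + p)) (b (S (m + p)))) with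
        (sum_n_m b m (m + p) + b (S (m + p))).
      replace (S (S (m+p))) with (S (m + S p)) by lia.
      replace (S (m + p)) with (m + S p)%nat by lia.
      generalize (Hstep (m + S p)%nat). replace (m + S (S p))%nat with (S (m + S p)) by lia. revert IH; lra. }
  assert (Hcau : cauchy_seq d v).
  { intros eps Heps.
    destruct (Cauchy_ex_series b (Hser M' HM'p) (mkposreal eps Heps)) as [N HN].
    exists N. intros m n Hm1 Hn1.
    assert (Hgen : forall m n, (N <= m)%nat -> (m < n)%nat -> d (v m) (v n) < eps).
    { intros m0 n0 H1 H2. replace n0 with (m0 + S (n0 - m0 - 1))%nat by lia.
      eapply Rle_lt_trans. apply Hsum.
      eapply Rle_lt_trans. apply Rle_abs.
      apply (HN m0 (m0 + (n0 - m0 - 1))%nat); lia. }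
    destruct (Nat.lt_total m n) as [Hlt|[Heq|Hgt]].
    - apply Hgen; auto.
    - subst. replace (d (v n) (v n)) with 0 by (symmetry; apply (proj1 (proj2 Hm)); auto). lra.
    - rewrite (proj1 (proj2 (proj2 Hm))). apply Hgen; auto. }
  destruct (Hcomp v Hcau) as [xbar Hxbar].
  exists xbar. intros x eps Heps.
  set (t := d x x0 + 1).
  assert (Ht : 0 < t) by (unfold t; generalize (proj1 Hm x x0); lra).
  pose proof (ex_series_lim_0 _ (Hser t Ht)) as Hl.
  apply is_lim_seq_spec in Hl.
  assert (He2 : 0 < eps / 2) by lra.
  destruct (Hl (mkposreal _ He2)) as [N2 HN2].
  destruct (Hxbar _ He2) as [N1 HN1].
  exists (S (N1 + N2)). intros n Hn.
  destruct n as [|n]; [lia|].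
  eapply Rle_lt_trans. apply (proj2 (proj2 (proj2 Hm))) with (y := v n).
  assert (A : d (comp_first T (S n) x) (v n) < eps / 2).
  { eapply Rle_lt_trans. apply Psi_contr; auto.
    eapply Rle_lt_trans.
    { destruct (PP (S n)) as [_ P2]. apply P2 with (t := t). apply Hm.
      unfold t; lra. }
    specialize (HN2 n ltac:(lia)). simpl in HN2.
    eapply Rle_lt_trans; [|apply HN2]. rewrite Rminus_0_r. apply Rle_abs. }
  specialize (HN1 n ltac:(lia)). lra.
Qed.
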